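(* For every graph $G$, the following statements are equivalent: (a) $G$ is localizable; (b) $G$ has a partition of $V(G)$ into exactly $\alpha(G)$ strong cliques; (c) $G$ has a partition of $V(G)$ into $\alpha(G)$ cliques, and in every partition of $V(G)$ into $\alpha(G)$ cliques, every clique is strong; (d) $G$ is well-covered and $\theta(G)=\alpha(G)$; (e) $i(G)=\theta(G)$.
   Context: All graphs are finite, simple, undirected. A clique is strong if it intersects every maximal (inclusion-wise) independent set. A graph is localizable if its vertex set admits a partition into strong cliques. A graph is well-covered if all its maximal independent sets have the same size. $\alpha(G)$ is the independence number, $\theta(G)$ the clique cover number (minimum number of cliques partitioning $V(G)$), and $i(G)$ the independent domination number (minimum size of a maximal independent set). *)

(* Defs.v *)
(* A finite simple graph is a symmetric irreflexive
   relation e on a finType T (vertex set = T). *)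
From mathcomp Require Import all_boot.
Set Implicit Arguments. Unset Strict Implicit. Unset Printing Implicit Defensive.

Section Graph.
Variables (T : finType) (e : rel T).

Definition simple_graph : Prop := irreflexive e /\ symmetric e.

Definition stable (A : {set T}) : bool :=
  [forall x in A, forall y in A, ~~ e x y].

Definition clique (A : {set T}) : bool :=
  [forall x in A, forall y in A, (x != y) ==> e x y].

Definition max_stable (A : {set T}) : bool := maxset stable A.

Definition strong_clique (C : {set T}) : bool :=
  clique C && [forall I : {set T}, max_stable I ==> (C :&: I != set0)].

Definition clique_partition (P : {set {set T}}) : bool :=
  partition P [set: T] && [forall C in P, clique C].

Definition localizable : Prop :=
  exists P, clique_partition P /\ forall C, C \in P -> strong_clique C.

Definition well_covered : Prop :=
  forall I J, max_stable I -> max_stable J -> #|I| = #|J|.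

Definition alpha : nat := \max_(A : {set T} | stable A) #|A|.

(* clique cover number: minimum size of a partition of V into cliques
   (the partition into singletons has size #|T|) *)
Definition theta : nat :=
  \big[minn/#|T|]_(P : {set {set T}} | clique_partition P) #|P|.

Definition indep_dom : nat :=
  \big[minn/#|T|]_(I : {set T} | max_stable I) #|I|.

End Graph.

(* Main.v *)
Require Import Defs.
From mathcomp Require Import all_boot.
Set Implicit Arguments. Unset Strict Implicit. Unset Printing Implicit Defensive.

Section Aux.
Variables (T : finType) (e : rel T).

Lemma sc_one (J C : {set T}) x y : stable e J -> clique e C ->
  x \in J -> y \in J -> x \in C -> y \in C -> x = y.
Proof.
move=> /forallP sJ /forallP cC xJ yJ xC yC.
apply/eqP; apply: contraT => nxy.
have h1 := (implyP (forallP (implyP (cC x) xC) y)) yC.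
have h2 := (implyP (forallP (implyP (sJ x) xJ) y)) yJ.
by rewrite (implyP h1 nxy) in h2.
Qed.

Lemma cp_part P : clique_partition e P -> partition P [set: T].
Proof. by case/andP. Qed.

Lemma cp_clique P C : clique_partition e P -> C \in P -> clique e C.
Proof. by case/andP=> _ /forallP H CP; exact: (implyP (H C) CP). Qed.

Lemma cp_pb P x : clique_partition e P -> pblock P x \in P /\ x \in pblock P x.
Proof.
move=> /cp_part /and3P [/eqP cov _ _].
by rewrite pblock_mem ?mem_pblock cov inE.
Qed.

Lemma cp_inj P J : clique_partition e P -> stable e J ->
  {in J &, injective (pblock P)}.
Proof.
move=> cP sJ x y xJ yJ exy.
have [Px xP] := cp_pb x cP; have [_ yP] := cp_pb y cP.
rewrite -exy in yP.
exact: (sc_one sJ (cp_clique cP Px) xJ yJ xP yP).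
Qed.

Lemma cp_card P J : clique_partition e P -> stable e J -> #|J| <= #|P|.
Proof.
move=> cP sJ; rewrite -(card_in_imset (cp_inj cP sJ)).
apply: subset_leq_card; apply/subsetP=> C /imsetP [x _ ->].
by case: (cp_pb x cP).
Qed.

Lemma cp_meet P J C : clique_partition e P -> stable e J -> #|P| <= #|J| ->
  C \in P -> C :&: J != set0.
Proof.
move=> cP sJ le CP.
have sub : [set pblock P x | x in J] \subset P.
  by apply/subsetP=> D /imsetP [x _ ->]; case: (cp_pb x cP).
have eqP' : [set pblock P x | x in J] = P.
  apply/eqP; rewrite eqEcard sub /= card_in_imset //; exact: cp_inj.
rewrite -eqP' in CP; case/imsetP: CP => x xJ ->.
apply/set0Pn; exists x; rewrite inE xJ andbT.
by case: (cp_pb x cP).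
Qed.

Lemma strong_card P I : clique_partition e P ->
  (forall C, C \in P -> strong_clique e C) -> max_stable e I -> #|I| = #|P|.
Proof.
move=> cP sP mI.
have sI : stable e I by case/maxsetP: mI.
apply/eqP; rewrite eqn_leq cp_card //=.
rewrite -(card_in_imset (cp_inj cP sI)); apply: subset_leq_card.
apply/subsetP=> C CP.
have /andP [_ /forallP H] := sP C CP.
have /set0Pn [x] := implyP (H I) mI; rewrite inE => /andP [xC xI].
apply/imsetP; exists x => //.
case/and3P: (cp_part cP) => _ triv _.
by rewrite (def_pblock triv CP xC).
Qed.

Lemma alpha_ex : exists2 A, max_stable e A & #|A| = alpha e.
Proof.
have ne : 0 < #|[pred A : {set T} | stable e A]|.
  apply/card_gt0P; exists set0; rewrite inE.
  by apply/forallP=> x; apply/implyP; rewrite inE.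
have [A Ain Aeq] := eq_bigmax_cond (fun A : {set T} => #|A|) ne.
exists A; last by rewrite /alpha; rewrite Aeq.
apply/maxsetP; split; first by rewrite inE in Ain.
move=> B sB AB; apply/eqP; rewrite eq_sym eqEcard AB /=.
have := @leq_bigmax_cond _ (stable e) (fun A : {set T} => #|A|) B sB.
by rewrite -/(alpha e) /alpha Aeq.
Qed.

Lemma stable_le_alpha A : stable e A -> #|A| <= alpha e.
Proof. move=> sA; exact: (@leq_bigmax_cond _ (stable e) (fun A : {set T} => #|A|) A sA). Qed.

Lemma bigmin_le (I : finType) (Q : pred I) (F : I -> nat) x0 i :
  Q i -> \big[minn/x0]_(j | Q j) F j <= F i.
Proof.
move=> Qi; rewrite unlock.
have : i \in index_enum I by rewrite /index_enum -enumT mem_enum.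
elim: (index_enum I) => //= j r IH; rewrite inE => /orP [/eqP <-|ir].
  by rewrite Qi geq_minl.
case: (Q j); last exact: IH.
exact: leq_trans (geq_minr _ _) (IH ir).
Qed.

Lemma bigmin_att (I : finType) (Q : pred I) (F : I -> nat) x0 i :
  Q i -> F i <= x0 -> exists2 j, Q j & \big[minn/x0]_(j | Q j) F j = F j.
Proof.
move=> Qi le.
have : (\big[minn/x0]_(j | Q j) F j = x0) \/
       exists2 j, Q j & \big[minn/x0]_(j | Q j) F j = F j.
  apply: (big_ind (fun v => v = x0 \/ exists2 j, Q j & v = F j)).
  - by left.
  - move=> a b Ha Hb /=; case: (leqP a b) => ab.
    + exact: Ha.
    + exact: Hb.
  - by move=> j Qj; right; exists j.
case=> // H; exists i => //.
apply/eqP; rewrite eqn_leq bigmin_le //= H //.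
Qed.

Lemma theta_ex : exists2 P, clique_partition e P & #|P| = theta e.
Proof.
set P0 := preim_partition id [set: T].
have cP0 : clique_partition e P0.
  apply/andP; split; first exact: preim_partitionP.
  apply/forallP=> C; apply/implyP=> /imsetP [x _ ->].
  apply/forallP=> y; apply/implyP; rewrite inE => /andP [_ /eqP <-].
  apply/forallP=> z; apply/implyP; rewrite inE => /andP [_ /eqP <-].
  by rewrite eqxx.
have le : #|P0| <= #|T|.
  by rewrite /P0 /preim_partition /equivalence_partition;
     apply: leq_trans (leq_imset_card _ _) _; rewrite cardsT.
have [P cP eq] := @bigmin_att _ (clique_partition e) (fun P : {set {set T}} => #|P|) _ P0 cP0 le.
by exists P => //; rewrite /theta eq.
Qed.

Lemma idom_ex : exists2 I, max_stable e I & #|I| = indep_dom e.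
Proof.
have [A mA _] := alpha_ex.
have [I mI eq] := @bigmin_att _ (max_stable e) (fun I : {set T} => #|I|) _ A mA (max_card _).
by exists I => //; rewrite /indep_dom eq.
Qed.

Lemma a_card P : clique_partition e P ->
  (forall C, C \in P -> strong_clique e C) ->
  [/\ #|P| = alpha e, theta e = alpha e & forall I, max_stable e I -> #|I| = alpha e].
Proof.
move=> cP sP.
have [A mA eA] := alpha_ex.
have hP : #|P| = alpha e by rewrite -eA (strong_card cP sP mA).
split=> //; last by move=> I mI; rewrite (strong_card cP sP mI).
have [Q cQ eQ] := theta_ex.
apply/eqP; rewrite eqn_leq; apply/andP; split.
  rewrite -hP; exact: (@bigmin_le _ (clique_partition e) (fun P : {set {set T}} => #|P|) #|T| P cP).
rewrite -eQ -eA; apply: cp_card cQ _; by case/maxsetP: mA.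
Qed.

End Aux.

Theorem mainTheorem3 (T : finType) (e : rel T) (He : simple_graph e) :
  let a := localizable e in
  let b := exists P, [/\ clique_partition e P, #|P| = alpha e &
                         forall C, C \in P -> strong_clique e C] in
  let c := (exists P, clique_partition e P /\ #|P| = alpha e) /\
           (forall P, clique_partition e P -> #|P| = alpha e ->
              forall C, C \in P -> strong_clique e C) in
  let d := well_covered e /\ theta e = alpha e in
  let f := indep_dom e = theta e in
  (a <-> b) /\ (a <-> c) /\ (a <-> d) /\ (a <-> f).
Proof.
move=> a b c d f.
have fa : f -> a.
  rewrite /f => H.
  have [Q cQ eQ] := theta_ex e.
  exists Q; split=> // C CQ; apply/andP; split; first exact: cp_clique cQ CQ.
  apply/forallP=> J; apply/implyP=> mJ.
  apply: (cp_meet cQ); first by case/maxsetP: mJ.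
  - rewrite eQ -H; exact: (@bigmin_le _ (max_stable e) (fun I : {set T} => #|I|) #|T| J mJ).
  - done.
have df : d -> f.
  case=> wc eth; rewrite /f eth.
  have [A mA eA] := alpha_ex e; have [I mI eI] := idom_ex e.
  by rewrite -eI -eA (wc I A).
have ad : a -> d.
  case=> P [cP sP]; have [_ h1 h2] := a_card cP sP.
  by split=> // I J mI mJ; rewrite !h2.
split; [split|split; [split|split; split]] => //.
- case=> P [cP sP]; exists P; split=> //; by case: (a_card cP sP).
- by case=> P [cP _ sP]; exists P.
- case=> P [cP sP]; have [hP _ h2] := a_card cP sP.
  split; first by exists P.
  move=> Q cQ eQ C CQ; apply/andP; split; first exact: cp_clique cQ CQ.
  apply/forallP=> J; apply/implyP=> mJ.
  apply: (cp_meet cQ); first by case/maxsetP: mJ.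
  + by rewrite eQ h2.
  + done.
- by case=> [[P [cP eP]] H]; exists P; split=> // C; exact: H.
- by move=> /df /fa.
- by move=> /ad /df.
Qed.
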